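(* Fix integers $a \ge 2$ and $\beta \ge 1$. Then there is a finite set $E$ of pairs of integers (depending only on $a$ and $\beta$) such that for all integers $\alpha \ge a$ and $r \ge a$ with $(\alpha, r) \notin E$ the following holds: for every integer $u_0 \ge 1$ with $\gcd(u_0,r)=1$ and every integer $n > r^{\alpha}$, $$L_n \ge u_0\, r^{\alpha + \beta + a - 2}\,(r+1)^n,$$ where $L_n := \operatorname{lcm}\{u_0, u_0 + r, u_0 + 2r, \ldots, u_0 + nr\}$.
   Context: For positive coprime integers $u_0, r$, the arithmetic progression is $u_k = u_0 + kr$, and $L_n$ is the least common multiple of $u_0, u_1, \ldots, u_n$. *)

(* Defs.v *)
From mathcomp Require Import all_boot.
Set Implicit Arguments. Unset Strict Implicit. Unset Printing Implicit Defensive.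

Definition Lseq (u0 r n : nat) : nat :=
  \big[lcmn/1%N]_(k < n.+1) (u0 + k * r).

(* Main.v *)
Require Import Defs.
From mathcomp Require Import all_boot zify.

Lemma prod_dvd (r : nat) : forall m b L, (forall i, i <= m -> b + i*r %| L) ->
  \prod_(i < m.+1) (b + i*r) %| L * m`! * r^m.
Proof.
elim=> [|m IH] b L H.
  by rewrite big_ord_recl big_ord0 muln1 /= mul0n addn0 fact0 expn0 !muln1; have := H 0 (leqnn 0); rewrite mul0n addn0.
have H0 := IH b L (fun i hi => H i (leqW hi)).
have H1 : \prod_(i < m.+1) (b + r + i*r) %| L * m`! * r^m.
  apply: IH => i hi; rewrite -addnA -mulSn; exact: H i.+1 hi.
set Z := L * m`! * r^m in H0 H1 *.
have -> : L * m.+1`! * r ^ m.+1 = Z * (b + m.+1 * r) - Z * b.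
  by rewrite /Z factS expnS mulnDr addKn; lia.
apply: dvdn_sub.
  by rewrite big_ord_recr /= dvdn_mul.
rewrite big_ord_recl /= mul0n addn0 mulnC dvdn_mul //.
rewrite (eq_bigr (fun i : 'I_m.+1 => b + r + i * r)) //.
by move=> i _; rewrite /bump /= add1n mulSn addnA.
Qed.

Lemma fact_dvd a b : a <= b -> a`! %| b`!.
Proof. by move=> h; rewrite (fact_split h) dvdn_mulr. Qed.

Lemma fact_pow r q : 0 < r -> r^q %| (q*r)`!.
Proof.
move=> r0; elim: q => [|q IH]; first by rewrite expn0 dvd1n.
have -> : q.+1 * r = (q * r + r.-1).+1 by rewrite mulSn; lia.
rewrite expnS factS dvdn_mul //.
  have -> : (q * r + r.-1).+1 = q.+1 * r by rewrite mulSn; lia.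
  exact: dvdn_mull.
apply: dvdn_trans IH _; apply: fact_dvd; exact: leq_addr.
Qed.

Lemma fact_pow2 r m : 0 < r -> r^(m %/ r) %| m`!.
Proof. move=> r0; apply: (dvdn_trans (@fact_pow r (m %/ r) r0)); apply: fact_dvd; exact: leq_trunc_div. Qed.

Lemma prod_low u0 r k : forall m,
  u0 * r^m * (k+m)`! <= (\prod_(i < m.+1) (u0 + k*r + i*r)) * k`!.
Proof.
elim=> [|m IH].
  by rewrite big_ord_recl big_ord0 /= mul0n !addn0 expn0 muln1 muln1 leq_mul2r leq_addr orbT.
rewrite big_ord_recr /= addnS factS expnS.
have h1 : (k+m).+1 * r <= u0 + k*r + m.+1 * r by rewrite -addnA -mulnDl addnS leq_addl.
apply: (@leq_trans ((u0 * r ^ m * (k + m)`!) * ((k + m).+1 * r))).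
  by rewrite leq_eqVlt; apply/orP; left; apply/eqP; lia.
apply: leq_trans (leq_mul IH h1) _.
by rewrite mulnAC.
Qed.

Lemma Lseq_gt0 u0 r n : 0 < u0 -> 0 < Lseq u0 r n.
Proof.
move=> h; rewrite /Lseq; apply: (big_ind (fun x => 0 < x)) => //.
  by move=> x y hx hy; rewrite lcmn_gt0 hx hy.
move=> i _; exact: leq_trans h (leq_addr _ _).
Qed.

Lemma coprime_prod_r r m (F : nat -> nat) : (forall i, coprime (F i) r) ->
  coprime (\prod_(i < m) F i) r.
Proof.
move=> h; apply: (big_ind (fun x => coprime x r)) => //.
  by rewrite /coprime gcd1n.
by move=> x y hx hy; rewrite coprimeMl hx hy.
Qed.

Lemma Lbound u0 r n k : 1 <= u0 -> 0 < r -> coprime u0 r -> k <= n ->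
  u0 * r^(n-k) * 'C(n,k) * r^((n-k) %/ r) <= Lseq u0 r n.
Proof.
move=> hu hr hc hk.
set m := n - k.
set P := \prod_(i < m.+1) (u0 + k*r + i*r).
set L := Lseq u0 r n.
have hd : P %| L * m`! * r^m.
  apply: prod_dvd => i hi.
  have hi' : k + i < n.+1 by rewrite /m in hi; lia.
  by rewrite /L /Lseq (biglcmn_sup (Ordinal hi')) //= mulnDl addnA.
have hcop : coprime P r.
  apply: (@coprime_prod_r r m.+1 (fun j => u0 + k*r + j*r)) => j /=; rewrite -addnA -mulnDl addnC /coprime gcdnC.
  by rewrite gcdnMDl gcdnC.
set q := r ^ (m %/ r).
have hq : q %| m`! by exact: fact_pow2.
set m' := m`! %/ q.
have hm : m`! = m' * q by rewrite divnK.
have hd2 : P %| L * m'.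
  have : P %| (L * m') * (q * r^m).
    rewrite mulnA -(mulnA L) -hm. exact hd.
  rewrite Gauss_dvdl // coprimeMr; apply/andP; split; exact: coprimeXr.
have hm'0 : 0 < m' by move: (fact_gt0 m); rewrite hm muln_gt0 => /andP[].
have hL : P <= L * m' by apply: dvdn_leq => //; rewrite muln_gt0 hm'0 Lseq_gt0.
have hlow := prod_low u0 r k m.
have hn : k + m = n by rewrite /m; lia.
rewrite hn in hlow.
have hb := bin_fact hk; rewrite -/m in hb.
rewrite -(@leq_pmul2r (k`! * m`!)); last by rewrite muln_gt0 !fact_gt0.
have e1 : u0 * r ^ m * 'C(n, k) * q * (k`! * m`!) = u0 * r^m * n`! * q by rewrite -hb; lia.
rewrite e1.
have : u0 * r ^ m * n`! * q <= P * k`! * q by rewrite leq_mul2r hlow orbT.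
move/leq_trans; apply.
have e2 : L * (k`! * m`!) = (L * m') * k`! * q by rewrite hm; lia.
rewrite e2 leq_mul2r leq_mul2r hL !orbT //.
Qed.

Lemma exists_max (f : nat -> nat) a d : exists j, a <= j <= a + d /\
  forall i, a <= i <= a + d -> f i <= f j.
Proof.
elim: d => [|d [j [hj hm]]].
  exists a; split; first by rewrite addn0 leqnn.
  by move=> i hi; have -> : i = a by rewrite addn0 in hi; lia.
case: (leqP (f (a + d.+1)) (f j)) => h.
  exists j; split; first by lia.
  move=> i hi; case: (ltnP i (a + d.+1)) => h2; first by apply: hm; lia.
  by have -> : i = a + d.+1 by lia.
exists (a + d.+1); split; first by lia.
move=> i hi; case: (ltnP i (a + d.+1)) => h2.
  by apply: leq_trans (hm i _) (ltnW h); lia.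
by have -> : i = a + d.+1 by lia.
Qed.

Lemma T_step r n i : 0 < r -> i < n %/ 2 -> 'C(n,i) * r^i <= 'C(n,i.+1) * r^i.+1.
Proof.
move=> hr hi.
rewrite -(@leq_pmul2l i.+1) //.
have e : i.+1 * ('C(n, i.+1) * r ^ i.+1) = ((n - i) * r) * ('C(n,i) * r^i).
  by rewrite mulnA mul_bin_left expnS; lia.
rewrite e leq_mul2r; apply/orP; right.
have h1 : i.+1 <= n - i by lia.
by apply: leq_trans h1 _; rewrite leq_pmulr.
Qed.

Lemma T_mono r n : 0 < r -> forall d i, i + d = n %/ 2 ->
  'C(n,i) * r^i <= 'C(n, n %/ 2) * r^(n %/ 2).
Proof.
move=> hr; elim=> [|d IH] i h; first by rewrite addn0 in h; rewrite h.
have hi : i < n %/ 2 by lia.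
have h2 : i.+1 + d = n %/ 2 by lia.
exact: leq_trans (T_step r n i hr hi) (IH _ h2).
Qed.

Lemma binsel r n : 0 < r -> exists m, n %/ 2 <= m <= n /\
  (r+1)^n <= n.+1 * ('C(n,m) * r^m).
Proof.
move=> hr.
have [j [hj hm]] := exists_max (fun i => 'C(n,i) * r^i) (n %/ 2) (n - n %/ 2).
have e : n %/ 2 + (n - n %/ 2) = n by lia.
rewrite e in hj hm.
exists j; split => //.
have hall : forall i, i <= n -> 'C(n,i) * r^i <= 'C(n,j) * r^j.
  move=> i hi; case: (leqP (n %/ 2) i) => h; first by apply: hm; lia.
  have h3 : n %/ 2 <= n %/ 2 <= n by lia.
  have hh : i + (n %/ 2 - i) = n %/ 2 by lia.
  exact: leq_trans (T_mono r n hr (n %/ 2 - i) i hh) (hm _ h3).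
rewrite addnC expnDn.
apply: (@leq_trans (\sum_(i < n.+1) ('C(n,j) * r^j))).
  apply: leq_sum => i _; rewrite exp1n mul1n; apply: hall; rewrite -ltnS; exact: ltn_ord.
by rewrite sum_nat_const card_ord.
Qed.

Lemma pow2_ge j : 1 <= j -> 2*j <= 2^j.
Proof.
case: j => // j _; rewrite expnS leq_mul2l /=; exact: ltn_expl.
Qed.

Lemma final_ineq r c m n : 2 <= r -> n <= 2*m+1 -> 2*c+5 <= m %/ r ->
  r^c * n.+1 <= r^(m %/ r).
Proof.
move=> hr hn hH.
set H := m %/ r in hH *.
have hm : m < (H+1) * r.
  rewrite /H {1}(divn_eq m r) mulnDl mul1n ltn_add2l ltn_pmod //; lia.
have h1 : n.+1 <= r * r * (H+1).
  apply: (@leq_trans (2 * r * (H+1))); first by nia.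
  by rewrite leq_mul2r leq_mul2r hr !orbT.
set j := H - (c+2).
have eH : H = (c+2) + j by rewrite /j; lia.
have h2 : H + 1 <= r ^ j.
  apply: (@leq_trans (2 ^ j)); last by rewrite leq_exp2r //; lia.
  apply: leq_trans (pow2_ge j _); lia.
rewrite eH expnD (expnD r c 2) -mulnA leq_mul2l; apply/orP; right.
apply: (@leq_trans (r * r * (H+1))) => //.
rewrite (_ : r ^ 2 = r * r) ?leq_mul2l ?h2 ?orbT //.
Qed.

Lemma sq_pow j : 4 <= j -> j * j <= 2^j.
Proof.
elim: j => // j IH hj.
case: (ltnP j 4) => h.
  by have -> : j = 3 by lia.
have := IH h; rewrite expnS => h'; nia.
Qed.

Lemma good a beta alpha r : 2 <= alpha -> 2 <= r ->
  (4*beta + 4*a + 10 <= alpha \/ 4*beta + 4*a + 10 <= r) ->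
  4*alpha + (4*beta + 4*a + 2) <= r^(alpha-1).
Proof.
move=> ha hr [h|h].
  apply: (@leq_trans (2^(alpha-1))); last by rewrite leq_exp2r //; lia.
  apply: leq_trans (sq_pow (alpha-1) _); nia.
have e : r^(alpha-1) = r * r^(alpha-2) by rewrite -expnS; congr (_ ^ _); lia.
have h2 : alpha - 2 < r^(alpha-2) by apply: ltn_expl; lia.
rewrite e; nia.
Qed.

Lemma Hbound a beta alpha r n m : 2 <= r ->
  4*alpha + (4*beta + 4*a + 2) <= r^(alpha-1) ->
  2 <= alpha -> r ^ alpha < n -> n %/ 2 <= m ->
  2*(alpha + beta + a - 2) + 5 <= m %/ r.
Proof.
move=> hr hX ha hn hm.
set X := r^(alpha-1) in hX.
have eX : r^alpha = r * X by rewrite /X -expnS; congr (_ ^ _); lia.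
set Y := X %/ 2.
have hY : 2 * Y <= X by rewrite /Y; lia.
have h1 : r * (2 * Y) <= r * X by rewrite leq_mul2l hY orbT.
have h2 : Y * r <= m by nia.
apply: (@leq_trans Y); first by rewrite /Y; lia.
by rewrite leq_divRL //; lia.
Qed.

Theorem corollary3p2 (a beta : nat) (ha : 2 <= a) (hbeta : 1 <= beta) :
  exists E : seq (nat * nat),
    forall alpha r : nat, a <= alpha -> a <= r -> (alpha, r) \notin E ->
    forall u0 n : nat, 1 <= u0 -> coprime u0 r -> r ^ alpha < n ->
      u0 * r ^ (alpha + beta + a - 2) * (r.+1) ^ n <= Lseq u0 r n.
Proof.
set B := 4*beta + 4*a + 10.
exists [seq (x, y) | x <- iota 0 B, y <- iota 0 B].
move=> alpha r hal hr hE u0 n hu hc hn.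
have hB : B <= alpha \/ B <= r.
  case: (leqP B alpha) => h1; first by left.
  case: (leqP B r) => h2; first by right.
  exfalso; move/negP: hE; apply; apply: allpairs_f; rewrite mem_iota; lia.
have hr2 : 2 <= r by lia.
have hX := good a beta alpha r (leq_trans ha hal) hr2 hB.
have [m [hm hT]] := binsel r n (ltnW hr2).
have hH := Hbound a beta alpha r n m hr2 hX (leq_trans ha hal) hn (proj1 (andP hm)).
have hmn : m <= n by case/andP: hm.
have hL := Lbound u0 r n (n - m) hu (ltnW hr2) hc (leq_subr _ _).
rewrite subKn // bin_sub // in hL.
set c := alpha + beta + a - 2 in hH *.
have hn2 : n <= 2 * m + 1 by case/andP: hm => h _; lia.
have hF := final_ineq r c m n hr2 hn2 hH.
apply: leq_trans hL.
rewrite -[r.+1]addn1.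
apply: (@leq_trans (u0 * r^c * (n.+1 * ('C(n, m) * r ^ m)))).
  by rewrite leq_mul2l hT orbT.
rewrite (_ : u0 * r ^ c * (n.+1 * ('C(n, m) * r ^ m)) = u0 * ('C(n, m) * r ^ m) * (r^c * n.+1)); last by lia.
rewrite (_ : u0 * r ^ m * 'C(n, m) * r ^ (m %/ r) = u0 * ('C(n, m) * r ^ m) * r ^ (m %/ r)); last by lia.
by rewrite leq_mul2l hF orbT.
Qed.
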